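(* Let $a=\pi/4$ and let $(C_2,g_{hex})$ be the quotient of the singular torus $(T,g_{hex})$ (defined below) by the group of order $2$ generated by the isometry $\sigma$ induced by $(x,y,z)\mapsto(-x,-y,z+\pi)$. Then $$\frac{\mathrm{Sys}(C_2,g_{hex})^3}{\mathrm{Vol}(C_2,g_{hex})}>\frac{2}{\sqrt3}.$$
   Context: $\Delta\subset\mathbb{R}^2$ is the hexagonal lattice generated by $(2a,0)$ and $(a,a\sqrt3)$. On $\mathbb{R}^3$ with coordinates $(x,y,z)$, $h=dx^2+dy^2+\cos^2\!\big(\mathrm{dist}((x,y),\Delta)\big)\,dz^2$ is a continuous Riemannian metric ($\mathrm{dist}$ Euclidean in $\mathbb{R}^2$). $(T,g_{hex})$ is the quotient of $(\mathbb{R}^3,h)$ by the translations $(x,y,z)\mapsto(x+4a,y,z)$, $(x,y,z)\mapsto(x+2a,y+2a\sqrt3,z)$, $(x,y,z)\mapsto(x,y,z+2\pi)$. $\sigma$ acts freely on $T$ and the quotient is homeomorphic to the orientable Bieberbach manifold of type $C_2$ (holonomy $\mathbb{Z}_2$). $\mathrm{Sys}$ denotes the infimum of lengths $\int (h(\gamma',\gamma'))^{1/2}dt$ of non-contractible piecewise smooth closed curves and $\mathrm{Vol}$ the Riemannian volume (volume form $\cos(\mathrm{dist}((x,y),\Delta))\,dx\,dy\,dz$). *)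

(* Defs.v *)
From Stdlib Require Import Reals Lra List ZArith.
From Coquelicot Require Import Coquelicot.
Open Scope R_scope.

Definition a_hex : R := PI / 4.

Definition distDelta (a x y : R) : R :=
  real (Glb_Rbar (fun r => exists m n : Z,
    r = sqrt ((x - (2 * a * IZR m + a * IZR n)) ^ 2
              + (y - a * sqrt 3 * IZR n) ^ 2))).

Definition pt := (R * R * R)%type.

(** Generators of the deck group Gamma of R^3 -> C_2 = T / <sigma>:
    the three translations defining T and the lift of sigma. *)
Inductive gen := T1 | T2 | T3 | Sig.

Definition act (a : R) (g : gen) (b : bool) (p : pt) : pt :=
  let '(x, y, z) := p in
  match g, b with
  | T1, true  => (x + 4 * a, y, z)
  | T1, false => (x - 4 * a, y, z)
  | T2, true  => (x + 2 * a, y + 2 * a * sqrt 3, z)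
  | T2, false => (x - 2 * a, y - 2 * a * sqrt 3, z)
  | T3, true  => (x, y, z + 2 * PI)
  | T3, false => (x, y, z - 2 * PI)
  | Sig, true  => (- x, - y, z + PI)
  | Sig, false => (- x, - y, z - PI)
  end.

Definition word_act (a : R) (w : list (gen * bool)) (p : pt) : pt :=
  fold_right (fun gb q => act a (fst gb) (snd gb) q) p w.

Definition C1 (f : R -> R) : Prop :=
  forall t, ex_derive f t /\ continuous (Derive f) t.

(** Speed |c'(t)|_h of a C^1 curve c = (fx,fy,fz) for the metric
    h = dx^2 + dy^2 + cos^2(dist((x,y),Delta)) dz^2. *)
Definition speed (a : R) (fx fy fz : R -> R) (t : R) : R :=
  sqrt ((Derive fx t) ^ 2 + (Derive fy t) ^ 2
        + (cos (distDelta a (fx t) (fy t))) ^ 2 * (Derive fz t) ^ 2).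

(** [pw_len a c u l L]: on [u, 1], with subdivision points l (ending at 1),
    c is piecewise C^1 (each piece is the restriction of a C^1 map on the
    closed subinterval) and its h-length is L. *)
Fixpoint pw_len (a : R) (c : R -> pt) (u : R) (l : list R) (L : R) : Prop :=
  match l with
  | nil => u = 1 /\ L = 0
  | v :: l' =>
      u < v /\
      exists fx fy fz : R -> R,
        C1 fx /\ C1 fy /\ C1 fz /\
        (forall t, u <= t <= v -> c t = (fx t, fy t, fz t)) /\
        exists L', pw_len a c v l' L' /\
                   L = RInt (speed a fx fy fz) u v + L'
  end.

Definition curve_length (a : R) (c : R -> pt) (L : R) : Prop :=
  exists l, pw_len a c 0 l L.

(** Systole of C_2 = R^3 / Gamma: non-contractible piecewise smooth closed
    curves in the quotient are exactly projections of piecewise smooth paths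
    c in the universal cover R^3 with c(1) = g(c(0)) for a non-trivial deck
    transformation g in Gamma. *)
Definition Sys_C2 (a : R) : R :=
  real (Glb_Rbar (fun L => exists (c : R -> pt) (w : list (gen * bool)),
    (exists q, word_act a w q <> q) /\
    c 1 = word_act a w (c 0) /\
    curve_length a c L)).

(** Riemannian volume of C_2: integral of the volume density
    cos(dist((x,y),Delta)) over the fundamental domain
    [0,4a) x [0, 2a sqrt 3) x [0, pi) of Gamma. *)
Definition Vol_C2 (a : R) : R :=
  RInt (fun z =>
    RInt (fun y =>
      RInt (fun x => cos (distDelta a x y)) 0 (4 * a)) 0 (2 * a * sqrt 3)) 0 PI.

(* Main.v *)
Require Import Defs.
From Stdlib Require Import Reals.
From Coquelicot Require Import Coquelicot.
From Stdlib Require Import Lra Lia ZArith List Classical.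
Open Scope R_scope.

Ltac pos2 := first [apply pow2_ge_0 | apply sqrt_pos | apply Rle_0_sqr | apply Rplus_le_le_0_compat; pos2 | apply Rmult_le_pos; pos2].

Definition Eset (a x y : R) := fun r => exists m n : Z,
    r = sqrt ((x - (2 * a * IZR m + a * IZR n)) ^ 2
              + (y - a * sqrt 3 * IZR n) ^ 2).

Lemma dD_fin a x y : Glb_Rbar (Eset a x y) = Finite (distDelta a x y).
Proof.
  unfold distDelta. fold (Eset a x y).
  destruct (Glb_Rbar_correct (Eset a x y)) as [Hlb Hglb].
  destruct (Glb_Rbar (Eset a x y)) as [l| |] eqn:E; auto.
  - exfalso. specialize (Hlb (sqrt ((x - (2 * a * IZR 0 + a * IZR 0)) ^ 2
              + (y - a * sqrt 3 * IZR 0) ^ 2))).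
    simpl in Hlb. apply Hlb. exists 0%Z, 0%Z. reflexivity.
  - exfalso. assert (H: Rbar_le (Finite 0) m_infty).
    { apply Hglb. intros r [m [n ->]]. simpl. apply sqrt_pos. }
    simpl in H. exact H.
Qed.

Lemma dD_le a x y m n :
  distDelta a x y <= sqrt ((x - (2 * a * IZR m + a * IZR n)) ^ 2
              + (y - a * sqrt 3 * IZR n) ^ 2).
Proof.
  destruct (Glb_Rbar_correct (Eset a x y)) as [Hlb _].
  rewrite dD_fin in Hlb. apply (Hlb _). exists m, n. reflexivity.
Qed.

Lemma dD_ge a x y b :
  (forall m n, b <= sqrt ((x - (2 * a * IZR m + a * IZR n)) ^ 2
              + (y - a * sqrt 3 * IZR n) ^ 2)) -> b <= distDelta a x y.
Proof.
  intros H.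
  destruct (Glb_Rbar_correct (Eset a x y)) as [_ Hglb].
  rewrite dD_fin in Hglb. apply (Hglb (Finite b)).
  intros r [m [n ->]]. apply H.
Qed.

Lemma dD_pos a x y : 0 <= distDelta a x y.
Proof. apply dD_ge. intros; apply sqrt_pos. Qed.

Lemma tri2 p1 p2 q1 q2 :
  sqrt ((p1 + q1) ^ 2 + (p2 + q2) ^ 2) <= sqrt (p1 ^ 2 + p2 ^ 2) + sqrt (q1 ^ 2 + q2 ^ 2).
Proof.
  assert (Hp := sqrt_pos (p1 ^ 2 + p2 ^ 2)). assert (Hq := sqrt_pos (q1 ^ 2 + q2 ^ 2)).
  apply Rsqr_incr_0_var; [|lra]. unfold Rsqr.
  rewrite sqrt_sqrt by pos2.
  replace ((sqrt (p1 ^ 2 + p2 ^ 2) + sqrt (q1 ^ 2 + q2 ^ 2)) *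
   (sqrt (p1 ^ 2 + p2 ^ 2) + sqrt (q1 ^ 2 + q2 ^ 2))) with
   ((p1^2+p2^2) + (q1^2+q2^2) + 2 * (sqrt (p1 ^ 2 + p2 ^ 2) * sqrt (q1 ^ 2 + q2 ^ 2))).
  2:{ rewrite <- (sqrt_sqrt (p1^2+p2^2)) at 1 by pos2. rewrite <- (sqrt_sqrt (q1^2+q2^2)) at 1 by pos2. ring. }
  rewrite <- sqrt_mult by pos2.
  assert (p1*q1+p2*q2 <= sqrt ((p1 ^ 2 + p2 ^ 2) * (q1 ^ 2 + q2 ^ 2))).
  { destruct (Rle_lt_dec (p1*q1+p2*q2) 0). { assert (Hs:=sqrt_pos ((p1 ^ 2 + p2 ^ 2) * (q1 ^ 2 + q2 ^ 2))). lra. }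
    apply Rsqr_incr_0_var; [| apply sqrt_pos]. unfold Rsqr. rewrite sqrt_sqrt by pos2.
    pose proof (pow2_ge_0 (p1*q2-p2*q1)). nra. }
  nra.
Qed.

Lemma dD_lip a x y x' y' :
  distDelta a x' y' <= distDelta a x y + sqrt ((x' - x) ^ 2 + (y' - y) ^ 2).
Proof.
  assert (H: distDelta a x' y' - sqrt ((x' - x) ^ 2 + (y' - y) ^ 2) <= distDelta a x y).
  { apply dD_ge. intros m n.
    assert (Hd := dD_le a x' y' m n).
    pose proof (tri2 (x - (2 * a * IZR m + a * IZR n)) (y - a * sqrt 3 * IZR n) (x' - x) (y' - y)).
    replace (x - (2 * a * IZR m + a * IZR n) + (x' - x)) with (x' - (2 * a * IZR m + a * IZR n)) in H by ring.
    replace (y - a * sqrt 3 * IZR n + (y' - y)) with (y' - a * sqrt 3 * IZR n) in H by ring.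
    lra. }
  lra.
Qed.

Lemma sqrt2_le_abs u v : sqrt (u ^ 2 + v ^ 2) <= Rabs u + Rabs v.
Proof.
  apply Rsqr_incr_0_var; [| pose proof (Rabs_pos u); pose proof (Rabs_pos v); lra].
  unfold Rsqr. rewrite sqrt_sqrt by pos2.
  pose proof (Rabs_pos u); pose proof (Rabs_pos v).
  replace (u^2) with (Rabs u * Rabs u) by (rewrite <- Rabs_mult; simpl; rewrite Rmult_1_r; apply Rabs_right; nra).
  replace (v^2) with (Rabs v * Rabs v) by (rewrite <- Rabs_mult; simpl; rewrite Rmult_1_r; apply Rabs_right; nra).
  nra.
Qed.

Lemma dD_lip_abs a x y x' y' :
  Rabs (distDelta a x' y' - distDelta a x y) <= Rabs (x' - x) + Rabs (y' - y).
Proof.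
  pose proof (dD_lip a x y x' y'). pose proof (dD_lip a x' y' x y).
  pose proof (sqrt2_le_abs (x'-x) (y'-y)). pose proof (sqrt2_le_abs (x-x') (y-y')).
  rewrite (Rabs_minus_sym x x'), (Rabs_minus_sym y y') in H2.
  apply Rabs_le; lra.
Qed.

Lemma round_ex s : exists n : Z, -(1/2) <= s - IZR n <= 1/2.
Proof.
  exists (up (s - 1/2)). destruct (archimed (s - 1/2)). lra.
Qed.

Lemma sqrt3_pos : 0 < sqrt 3.
Proof. apply sqrt_lt_R0; lra. Qed.

Lemma sqrt3_sq : sqrt 3 * sqrt 3 = 3.
Proof. apply sqrt_sqrt; lra. Qed.

Lemma dD_le_PI3 x y : distDelta a_hex x y <= PI / 3.
Proof.
  set (a := a_hex). assert (Ha : a = PI/4) by reflexivity.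
  assert (HPI := PI_RGT_0).
  pose proof sqrt3_pos. pose proof sqrt3_sq.
  destruct (round_ex (y / (a * sqrt 3))) as [n Hn].
  destruct (round_ex ((x - a * IZR n) / (2 * a))) as [m Hm].
  eapply Rle_trans. apply (dD_le a x y m n).
  assert (Hapos: 0 < a) by lra.
  set (u := x - (2 * a * IZR m + a * IZR n)).
  set (v := y - a * sqrt 3 * IZR n).
  assert (Hu : u = 2 * a * ((x - a * IZR n) / (2 * a) - IZR m)) by (unfold u; field; lra).
  assert (Hv : v = a * sqrt 3 * (y / (a * sqrt 3) - IZR n)) by (unfold v; field; lra).
  assert (Hu2 : u ^ 2 <= a ^ 2).
  { rewrite Hu. set (t := (x - a * IZR n) / (2 * a) - IZR m) in *.
    assert (t^2 <= 1/4) by nra. replace ((2*a*t)^2) with (4*a^2*t^2) by ring.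
    assert (0 <= a^2) by pos2. nra. }
  assert (Hv2 : v ^ 2 <= 3 * a ^ 2 / 4).
  { rewrite Hv. set (t := y / (a * sqrt 3) - IZR n) in *.
    replace ((a * sqrt 3 * t) ^ 2) with (3 * a^2 * t^2) by
      (transitivity (a^2*t^2*(sqrt 3 * sqrt 3)); [rewrite sqrt3_sq; ring | ring]).
    assert (t^2 <= 1/4) by nra. assert (0 <= a^2) by pos2. nra. }
  apply Rsqr_incr_0_var; [|lra]. unfold Rsqr. rewrite sqrt_sqrt by pos2.
  rewrite Ha in Hu2, Hv2. nra.
Qed.

Lemma cos_dist_ge x y : 1/2 <= cos (distDelta a_hex x y).
Proof.
  rewrite <- cos_PI3. pose proof (dD_le_PI3 x y). pose proof (dD_pos a_hex x y).
  pose proof PI_RGT_0.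
  destruct (Req_dec (distDelta a_hex x y) (PI/3)) as [->|]; [lra|].
  left. apply cos_decreasing_1; lra.
Qed.

Lemma cos_dist_le x y : cos (distDelta a_hex x y) <= 1.
Proof. apply COS_bound. Qed.

Lemma cos_lip0 u v : u < v -> Rabs (cos v - cos u) <= v - u.
Proof.
  intros H. destruct (MVT_cor2 cos (fun t => - sin t) u v H) as [c [Hc _]].
  { intros; apply derivable_pt_lim_cos. }
  rewrite Hc. rewrite Rabs_mult. rewrite (Rabs_right (v-u)) by lra.
  pose proof (SIN_bound c). rewrite Rabs_Ropp.
  assert (Rabs (sin c) <= 1) by (apply Rabs_le; lra). nra.
Qed.

Lemma cos_lip u v : Rabs (cos u - cos v) <= Rabs (u - v).
Proof.
  destruct (Rtotal_order u v) as [H|[H|H]].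
  - rewrite Rabs_minus_sym. rewrite (Rabs_left (u-v)) by lra. pose proof (cos_lip0 u v H). lra.
  - subst. rewrite !Rminus_diag, Rabs_R0. lra.
  - rewrite (Rabs_right (u-v)) by lra. apply cos_lip0; lra.
Qed.

Lemma cont_eps (f : R -> R) x :
  (forall eps, 0 < eps -> exists d, 0 < d /\ forall y, Rabs (y - x) < d -> Rabs (f y - f x) < eps) ->
  continuous f x.
Proof.
  intros H. apply continuity_pt_filterlim.
  intros eps Heps. destruct (H eps Heps) as [d [Hd Hy]]. exists d. split; auto.
  intros y [_ Hdist]. simpl in *. unfold R_dist in *. apply Hy; auto.
Qed.

Lemma eps_cont (f : R -> R) x : continuous f x ->
  forall eps, 0 < eps -> exists d, 0 < d /\ forall y, Rabs (y - x) < d -> Rabs (f y - f x) < eps.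
Proof.
  intros H. apply continuity_pt_filterlim in H.
  intros eps Heps. destruct (H eps Heps) as [d [Hd Hy]]. exists d. split; auto.
  intros y Hyx. destruct (Req_dec y x) as [->|Hne].
  - rewrite Rminus_diag, Rabs_R0. lra.
  - apply (Hy y). split; [split; auto | exact Hyx]. constructor.
Qed.

Lemma exRI (g : R -> R) a b : (forall t, continuous g t) -> ex_RInt g a b.
Proof. intros H. apply (ex_RInt_continuous (V:=R_CompleteNormedModule)). intros; apply H. Qed.

Lemma RInt_const_R a b c : RInt (fun _ => c) a b = (b - a) * c.
Proof. rewrite RInt_const. reflexivity. Qed.

Lemma RInt_chasles_R (g : R -> R) a b c : (forall t, continuous g t) ->
  RInt g a b + RInt g b c = RInt g a c.
Proof.
  intros Hg. rewrite <- (RInt_Chasles g a b c); try (apply exRI; apply Hg).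
  reflexivity.
Qed.

Lemma RInt_ge_const (g : R -> R) a b m : a <= b -> (forall t, continuous g t) ->
  (forall t, a <= t <= b -> m <= g t) -> (b - a) * m <= RInt g a b.
Proof.
  intros Hab Hg Hm. rewrite <- RInt_const_R. apply RInt_le; auto.
  - apply ex_RInt_const.
  - apply exRI; apply Hg.
  - intros; apply Hm; lra.
Qed.

Lemma RInt_le_const (g : R -> R) a b m : a <= b -> (forall t, continuous g t) ->
  (forall t, a <= t <= b -> g t <= m) -> RInt g a b <= (b - a) * m.
Proof.
  intros Hab Hg Hm. rewrite <- RInt_const_R. apply RInt_le; auto.
  - apply exRI; apply Hg.
  - apply ex_RInt_const.
  - intros; apply Hm; lra.
Qed.

Lemma RInt_near (g : R -> R) t : (forall r, continuous g r) ->
  exists d C, 0 < d /\ forall s, Rabs s < d -> Rabs (RInt g t (t + s)) <= Rabs s * C.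
Proof.
  intros Hg. destruct (eps_cont g t (Hg t) 1 Rlt_0_1) as [d [Hd Hy]].
  exists d, (Rabs (g t) + 1). split; auto. intros s Hs.
  assert (Hb : forall r, Rabs (r - t) < d -> Rabs (g r) <= Rabs (g t) + 1).
  { intros r0 Hr. specialize (Hy r0 Hr). pose proof (Rabs_triang_inv (g r0) (g t)). lra. }
  destruct (Rle_lt_dec 0 s).
  - rewrite (Rabs_right s) by lra.
    replace s with (t + s - t) at 2 by ring.
    apply abs_RInt_le_const; [lra| apply exRI; apply Hg |].
    intros r0 Hr. apply Hb. rewrite Rabs_right by lra. rewrite Rabs_right in Hs by lra. lra.
  - rewrite (Rabs_left s) by lra.
    rewrite <- (opp_RInt_swap g) by (apply exRI; apply Hg). unfold opp; simpl. rewrite Rabs_Ropp.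
    replace (-s) with (t - (t + s)) by ring.
    apply abs_RInt_le_const; [lra| apply exRI; apply Hg |].
    intros r0 Hr. apply Hb. rewrite Rabs_left in Hs by lra.
    apply Rabs_lt_between. lra.
Qed.

Lemma le_eps x y c : 0 < c -> (forall eps, 0 < eps -> x <= y + eps * c) -> x <= y.
Proof.
  intros Hc H. destruct (Rle_lt_dec x y); auto.
  specialize (H ((x - y) / (2 * c))). assert (0 < (x - y) / (2 * c)).
  { apply Rdiv_lt_0_compat; lra. }
  specialize (H H0). replace ((x - y) / (2 * c) * c) with ((x - y)/2) in H by (field; lra). lra.
Qed.

Lemma dini (h g : R -> R) u v : u < v -> (forall t, continuous g t) ->
  (forall t, u <= t <= v -> forall eps, 0 < eps -> exists d, 0 < d /\
     forall s, Rabs s < d -> u <= t + s <= v -> Rabs (h (t + s) - h t) <= Rabs s * (g t + eps)) ->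
  h v - h u <= RInt g u v.
Proof.
  intros Huv Hg Hh.
  apply (le_eps _ _ (v - u)); [lra|]. intros eps Heps.
  set (P := fun t => h t - h u <= RInt g u t + eps * (t - u)).
  set (A := fun t => u <= t <= v /\ forall r, u <= r <= t -> P r).
  assert (HA : bound A). { exists v. intros t [Ht _]. lra. }
  assert (HAu : exists x, A x).
  { exists u. split; [lra|]. intros r Hr. replace r with u by lra. unfold P.
    rewrite RInt_point. unfold zero; simpl. lra. }
  destruct (completeness A HA HAu) as [T [HTub HTlub]].
  assert (HuT : u <= T). { apply HTub. split; [lra|]. intros r Hr. replace r with u by lra. unfold P.
    rewrite RInt_point. unfold zero; simpl. lra. }
  assert (HTv : T <= v). { apply HTlub. intros t [Ht _]. lra. }
  assert (S1 : forall r, u <= r < T -> P r).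
  { intros r Hr. destruct (classic (exists t, A t /\ r < t)) as [[t [[_ Ht] Hrt]]|Hn].
    - apply Ht. split; lra.
    - exfalso. assert (T <= r). { apply HTlub. intros t Ht. destruct (Rle_lt_dec t r); auto.
        exfalso; apply Hn; exists t; auto. }
      lra. }
  assert (S2 : P T).
  { destruct (Req_dec T u) as [->|HTu].
    - unfold P. rewrite RInt_point. unfold zero; simpl. lra.
    - apply NNPP. intros HnP. unfold P in HnP.
      set (del := h T - h u - (RInt g u T + eps * (T - u))).
      assert (Hdel : 0 < del) by (unfold del; lra).
      destruct (Hh T (conj HuT HTv) 1 Rlt_0_1) as [d1 [Hd1 H1]].
      destruct (RInt_near g T Hg) as [d2 [C [Hd2 H2]]].
      set (K := Rabs (g T + 1) + Rabs C + eps + 1).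
      assert (HK : 0 < K) by (unfold K; pose proof (Rabs_pos (g T + 1)); pose proof (Rabs_pos C); lra).
      set (m0 := Rmin (Rmin d1 d2) (Rmin (T - u) (del / (4 * K)))).
      assert (Hm0 : 0 < m0).
      { unfold m0. apply Rmin_pos; apply Rmin_pos; try lra. apply Rdiv_lt_0_compat; lra. }
      assert (Hm1 : m0 <= d1) by (unfold m0; eapply Rle_trans; [apply Rmin_l|apply Rmin_l]).
      assert (Hm2 : m0 <= d2) by (unfold m0; eapply Rle_trans; [apply Rmin_l|apply Rmin_r]).
      assert (Hm3 : m0 <= T - u) by (unfold m0; eapply Rle_trans; [apply Rmin_r|apply Rmin_l]).
      assert (Hm4 : m0 <= del / (4 * K)) by (unfold m0; eapply Rle_trans; [apply Rmin_r|apply Rmin_r]).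
      set (s := - (m0 / 2)).
      assert (Hs0 : 0 < - s) by (unfold s; lra).
      assert (Hsd1 : Rabs s < d1) by (rewrite Rabs_left; unfold s; lra).
      assert (Hsd2 : Rabs s < d2) by (rewrite Rabs_left; unfold s; lra).
      assert (HsTu : - s <= T - u) by (unfold s; lra).
      assert (HsK : - s <= del / (4 * K)) by (unfold s; lra).
      assert (HP := S1 (T + s) ltac:(lra)). unfold P in HP.
      specialize (H1 s Hsd1 ltac:(lra)). specialize (H2 s Hsd2).
      rewrite <- (RInt_chasles_R g u T (T + s) Hg) in HP.
      rewrite (Rabs_left s) in H1, H2 by lra.
      assert (Habs : g T + 1 <= K) by (unfold K; pose proof (Rle_abs (g T + 1)); pose proof (Rabs_pos C); lra).
      assert (HabsC : C <= K) by (unfold K; pose proof (Rle_abs C); pose proof (Rabs_pos (g T + 1)); lra).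
      pose proof (proj1 (Rabs_le_between _ _) H1) as [H1a _]. pose proof (proj1 (Rabs_le_between _ _) H2) as [_ H2a].
      assert (- s * K <= del / 4).
      { replace (del / 4) with (del / (4 * K) * K) by (field; lra). apply Rmult_le_compat_r; lra. }
      assert (- s * (g T + 1) <= - s * K) by (apply Rmult_le_compat_l; lra).
      assert (- s * C <= - s * K) by (apply Rmult_le_compat_l; lra).
      assert (-s * eps <= -s * K) by (apply Rmult_le_compat_l; unfold K; pose proof (Rabs_pos (g T + 1)); pose proof (Rabs_pos C); lra).
      assert (eps * (T + s - u) = eps * (T - u) - (- s * eps)) by ring.
      assert (0 <= -s*eps) by (apply Rmult_le_pos; lra). unfold del in *. lra. }
  assert (HTA : A T). { split; [lra|]. intros r Hr. destruct (Req_dec r T) as [->|]; auto. apply S1; lra. }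
  destruct (Req_dec T v) as [<-|HTv'].
  - exact S2.
  - exfalso.
    destruct (Hh T (conj HuT HTv) (eps/2) ltac:(lra)) as [d1 [Hd1 H1]].
    destruct (eps_cont g T (Hg T) (eps/2) ltac:(lra)) as [d2 [Hd2 H2]].
    set (s0 := Rmin (Rmin d1 d2) (v - T) / 2).
    assert (Hs0 : 0 < s0). { unfold s0. apply Rdiv_lt_0_compat; [|lra]. repeat apply Rmin_pos; lra. }
    assert (Hs0m : s0 < Rmin (Rmin d1 d2) (v - T)) by (unfold s0 in *; lra).
    assert (Hm1 : Rmin (Rmin d1 d2) (v - T) <= d1) by (eapply Rle_trans; [apply Rmin_l|apply Rmin_l]).
    assert (Hm2 : Rmin (Rmin d1 d2) (v - T) <= d2) by (eapply Rle_trans; [apply Rmin_l|apply Rmin_r]).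
    assert (Hm3 : Rmin (Rmin d1 d2) (v - T) <= v - T) by apply Rmin_r.
    assert (HA2 : A (T + s0)).
    { split; [lra|]. intros r Hr. destruct (Rle_lt_dec r T).
      - destruct HTA as [_ HT]. apply HT; lra.
      - set (s := r - T). replace r with (T + s) by (unfold s; ring).
        assert (Hsa : Rabs s < d1) by (rewrite Rabs_right; unfold s; lra).
        specialize (H1 s Hsa ltac:(unfold s; lra)). rewrite (Rabs_right s) in H1 by (unfold s; lra).
        assert (Hint : s * (g T - eps / 2) <= RInt g T (T + s)).
        { replace s with (T + s - T) at 1 by ring. apply RInt_ge_const; auto. unfold s; lra.
          intros t Ht. assert (Rabs (t - T) < d2) by (rewrite Rabs_right; unfold s in *; lra).
          specialize (H2 t H). apply Rabs_lt_between in H2. lra. }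
        unfold P. rewrite <- (RInt_chasles_R g u T (T + s) Hg). unfold P in S2.
        apply Rabs_le_between in H1. nra. }
    assert (T + s0 <= T) by (apply HTub; auto). lra.
Qed.

Lemma cont_add (f g : R -> R) t : continuous f t -> continuous g t -> continuous (fun s => f s + g s) t.
Proof. intros H1 H2. exact (continuous_plus f g t H1 H2). Qed.

Lemma cont_mul (f g : R -> R) t : continuous f t -> continuous g t -> continuous (fun s => f s * g s) t.
Proof. intros H1 H2. exact (continuous_mult f g t H1 H2). Qed.

Lemma cont_sq (f : R -> R) t : continuous f t -> continuous (fun s => f s ^ 2) t.
Proof.
  intros H. apply (continuous_ext (fun s => f s * f s)). { intros x. change (f x * f x = f x ^ 2). ring. }
  apply cont_mul; auto.
Qed.

Lemma cont_dist (fx fy : R -> R) t : continuous fx t -> continuous fy t ->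
  continuous (fun s => distDelta a_hex (fx s) (fy s)) t.
Proof.
  intros Hx Hy. apply cont_eps. intros eps Heps.
  destruct (eps_cont fx t Hx (eps/2) ltac:(lra)) as [d1 [Hd1 H1]].
  destruct (eps_cont fy t Hy (eps/2) ltac:(lra)) as [d2 [Hd2 H2]].
  exists (Rmin d1 d2). split; [apply Rmin_pos; auto|]. intros y Hyt.
  eapply Rle_lt_trans; [apply dD_lip_abs|].
  assert (Rabs (y - t) < d1) by (eapply Rlt_le_trans; [exact Hyt| apply Rmin_l]).
  assert (Rabs (y - t) < d2) by (eapply Rlt_le_trans; [exact Hyt| apply Rmin_r]).
  specialize (H1 y H). specialize (H2 y H0). lra.
Qed.

Lemma C1_cont f t : Defs.C1 f -> continuous f t.
Proof. intros H. apply (ex_derive_continuous (K:=R_AbsRing) (V:=R_NormedModule)). apply H. Qed.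

Lemma speed_cont fx fy fz t : Defs.C1 fx -> Defs.C1 fy -> Defs.C1 fz -> continuous (speed a_hex fx fy fz) t.
Proof.
  intros Hx Hy Hz. unfold speed.
  apply (continuous_sqrt_comp (fun s => Derive fx s ^ 2 + Derive fy s ^ 2 +
     cos (distDelta a_hex (fx s) (fy s)) ^ 2 * Derive fz s ^ 2)).
  apply cont_add; [apply cont_add|]; try apply cont_sq; try apply Hx; try apply Hy.
  apply cont_mul; apply cont_sq; [|apply Hz].
  apply (continuous_cos_comp (fun s => distDelta a_hex (fx s) (fy s))).
  apply cont_dist; apply C1_cont; auto.
Qed.

Definition Nrm (k w1 w2 w3 : R) := sqrt (w1 ^ 2 + w2 ^ 2 + (k * w3) ^ 2).

Lemma tri3 p1 p2 p3 q1 q2 q3 :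
  sqrt ((p1 + q1) ^ 2 + (p2 + q2) ^ 2 + (p3 + q3) ^ 2) <=
  sqrt (p1 ^ 2 + p2 ^ 2 + p3 ^ 2) + sqrt (q1 ^ 2 + q2 ^ 2 + q3 ^ 2).
Proof.
  assert (Hp := sqrt_pos (p1 ^ 2 + p2 ^ 2 + p3 ^ 2)). assert (Hq := sqrt_pos (q1 ^ 2 + q2 ^ 2 + q3 ^ 2)).
  apply Rsqr_incr_0_var; [|lra]. unfold Rsqr.
  rewrite sqrt_sqrt by pos2.
  replace ((sqrt (p1 ^ 2 + p2 ^ 2 + p3 ^ 2) + sqrt (q1 ^ 2 + q2 ^ 2 + q3 ^ 2)) *
   (sqrt (p1 ^ 2 + p2 ^ 2 + p3 ^ 2) + sqrt (q1 ^ 2 + q2 ^ 2 + q3 ^ 2))) with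
   ((p1^2+p2^2+p3^2) + (q1^2+q2^2+q3^2) + 2 * (sqrt (p1 ^ 2 + p2 ^ 2 + p3 ^ 2) * sqrt (q1 ^ 2 + q2 ^ 2 + q3 ^ 2))).
  2:{ rewrite <- (sqrt_sqrt (p1^2+p2^2+p3^2)) at 1 by pos2. rewrite <- (sqrt_sqrt (q1^2+q2^2+q3^2)) at 1 by pos2. ring. }
  rewrite <- sqrt_mult by pos2.
  assert (p1*q1+p2*q2+p3*q3 <= sqrt ((p1 ^ 2 + p2 ^ 2 + p3 ^ 2) * (q1 ^ 2 + q2 ^ 2 + q3 ^ 2))).
  { destruct (Rle_lt_dec (p1*q1+p2*q2+p3*q3) 0).
    { assert (Hs:=sqrt_pos ((p1 ^ 2 + p2 ^ 2 + p3 ^ 2) * (q1 ^ 2 + q2 ^ 2 + q3 ^ 2))). lra. }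
    apply Rsqr_incr_0_var; [| apply sqrt_pos]. unfold Rsqr. rewrite sqrt_sqrt by pos2.
    pose proof (pow2_ge_0 (p1*q2-p2*q1)). pose proof (pow2_ge_0 (p1*q3-p3*q1)).
    pose proof (pow2_ge_0 (p2*q3-p3*q2)). nra. }
  nra.
Qed.

Lemma Nrm_tri k p1 p2 p3 q1 q2 q3 :
  Nrm k (p1 + q1) (p2 + q2) (p3 + q3) <= Nrm k p1 p2 p3 + Nrm k q1 q2 q3.
Proof.
  unfold Nrm. rewrite Rmult_plus_distr_l. apply tri3.
Qed.

Lemma abs_sq u : Rabs u ^ 2 = u ^ 2.
Proof. destruct (Rle_lt_dec 0 u); [rewrite Rabs_right by lra | rewrite Rabs_left by lra]; ring. Qed.

Lemma Nrm_le_abs k w1 w2 w3 : Rabs k <= 1 -> Nrm k w1 w2 w3 <= Rabs w1 + Rabs w2 + Rabs w3.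
Proof.
  intros Hk. unfold Nrm.
  pose proof (Rabs_pos w1); pose proof (Rabs_pos w2); pose proof (Rabs_pos w3).
  apply Rsqr_incr_0_var; [|lra]. unfold Rsqr. rewrite sqrt_sqrt by pos2.
  rewrite <- (abs_sq w1), <- (abs_sq w2).
  assert ((k * w3) ^ 2 <= Rabs w3 ^ 2).
  { rewrite <- abs_sq, Rabs_mult. pose proof (Rabs_pos k). 
    assert (Rabs k * Rabs w3 <= Rabs w3) by nra. apply pow_incr. split; auto.
    apply Rmult_le_pos; auto. }
  nra.
Qed.

Lemma Nrm_scal k s w1 w2 w3 : Nrm k (s * w1) (s * w2) (s * w3) = Rabs s * Nrm k w1 w2 w3.
Proof.
  unfold Nrm. rewrite <- (sqrt_pow2 (Rabs s)) by apply Rabs_pos.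
  rewrite <- sqrt_mult by pos2. f_equal. rewrite abs_sq. ring.
Qed.

Definition ML (F : R -> R -> R -> R) := forall x y z eps, 0 < eps -> exists eta, 0 < eta /\
  forall x' y' z', Rabs (x' - x) < eta -> Rabs (y' - y) < eta -> Rabs (z' - z) < eta ->
   Rabs (F x' y' z' - F x y z) <= Nrm (cos (distDelta a_hex x y)) (x' - x) (y' - y) (z' - z)
       + eps * (Rabs (x' - x) + Rabs (y' - y) + Rabs (z' - z)).

Lemma deriv_eps f t e : ex_derive f t -> 0 < e -> exists d, 0 < d /\
  forall s, Rabs s < d -> Rabs (f (t + s) - f t - s * Derive f t) <= e * Rabs s.
Proof.
  intros Hf He. pose proof (Derive_correct f t Hf) as H.
  apply is_derive_Reals in H. destruct (H e He) as [d Hd].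
  exists d. split; [apply cond_pos|]. intros s Hs.
  destruct (Req_dec s 0) as [->|Hs0].
  - rewrite Rplus_0_r, Rabs_R0. replace (f t - f t - 0 * Derive f t) with 0 by ring. rewrite Rabs_R0. lra.
  - specialize (Hd s Hs0 Hs).
    replace (f (t + s) - f t - s * Derive f t) with (s * ((f (t + s) - f t) / s - Derive f t)) by (field; auto).
    rewrite Rabs_mult. rewrite Rmult_comm. apply Rmult_le_compat_r; [apply Rabs_pos|lra].
Qed.

Lemma piece_bound F fx fy fz u v : ML F -> Defs.C1 fx -> Defs.C1 fy -> Defs.C1 fz -> u < v ->
  F (fx v) (fy v) (fz v) - F (fx u) (fy u) (fz u) <= RInt (speed a_hex fx fy fz) u v.
Proof.
  intros HF Hx Hy Hz Huv.
  apply (dini (fun t => F (fx t) (fy t) (fz t))); auto.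
  { intros t; apply speed_cont; auto. }
  intros t Ht eps Heps.
  set (M := Rabs (Derive fx t) + Rabs (Derive fy t) + Rabs (Derive fz t)).
  assert (HM : 0 <= M) by (unfold M; pose proof (Rabs_pos (Derive fx t)); pose proof (Rabs_pos (Derive fy t)); pose proof (Rabs_pos (Derive fz t)); lra).
  set (e := Rmin 1 (eps / 6)).
  assert (He : 0 < e) by (unfold e; apply Rmin_pos; lra).
  assert (He1 : e <= 1) by apply Rmin_l.
  assert (He2 : e <= eps / 6) by apply Rmin_r.
  set (eps1 := eps / (2 * (M + 3))).
  assert (Heps1 : 0 < eps1) by (unfold eps1; apply Rdiv_lt_0_compat; lra).
  destruct (HF (fx t) (fy t) (fz t) eps1 Heps1) as [eta [Heta HFe]].
  destruct (deriv_eps fx t e (proj1 (Hx t)) He) as [d1 [Hd1 H1]].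
  destruct (deriv_eps fy t e (proj1 (Hy t)) He) as [d2 [Hd2 H2]].
  destruct (deriv_eps fz t e (proj1 (Hz t)) He) as [d3 [Hd3 H3]].
  set (d4 := eta / (M + 1)).
  assert (Hd4 : 0 < d4) by (unfold d4; apply Rdiv_lt_0_compat; lra).
  exists (Rmin (Rmin d1 d2) (Rmin d3 d4)). split; [repeat apply Rmin_pos; auto|].
  intros s Hs _.
  assert (Hs1 : Rabs s < d1) by (eapply Rlt_le_trans; [exact Hs| eapply Rle_trans; [apply Rmin_l|apply Rmin_l]]).
  assert (Hs2 : Rabs s < d2) by (eapply Rlt_le_trans; [exact Hs| eapply Rle_trans; [apply Rmin_l|apply Rmin_r]]).
  assert (Hs3 : Rabs s < d3) by (eapply Rlt_le_trans; [exact Hs| eapply Rle_trans; [apply Rmin_r|apply Rmin_l]]).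
  assert (Hs4 : Rabs s < d4) by (eapply Rlt_le_trans; [exact Hs| eapply Rle_trans; [apply Rmin_r|apply Rmin_r]]).
  specialize (H1 s Hs1). specialize (H2 s Hs2). specialize (H3 s Hs3).
  set (rx := fx (t + s) - fx t - s * Derive fx t) in *.
  set (ry := fy (t + s) - fy t - s * Derive fy t) in *.
  set (rz := fz (t + s) - fz t - s * Derive fz t) in *.
  assert (Has : 0 <= Rabs s) by apply Rabs_pos.
  assert (Hsd4 : Rabs s * (M + 1) < eta).
  { unfold d4 in Hs4. apply (Rmult_lt_compat_r (M + 1)) in Hs4; [|lra].
    replace (eta / (M + 1) * (M + 1)) with eta in Hs4 by (field; lra). lra. }
  assert (Hdx : Rabs (fx (t + s) - fx t) <= Rabs s * Rabs (Derive fx t) + Rabs rx).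
  { replace (fx (t + s) - fx t) with (s * Derive fx t + rx) by (unfold rx; ring).
    rewrite <- Rabs_mult. apply Rabs_triang. }
  assert (Hdy : Rabs (fy (t + s) - fy t) <= Rabs s * Rabs (Derive fy t) + Rabs ry).
  { replace (fy (t + s) - fy t) with (s * Derive fy t + ry) by (unfold ry; ring).
    rewrite <- Rabs_mult. apply Rabs_triang. }
  assert (Hdz : Rabs (fz (t + s) - fz t) <= Rabs s * Rabs (Derive fz t) + Rabs rz).
  { replace (fz (t + s) - fz t) with (s * Derive fz t + rz) by (unfold rz; ring).
    rewrite <- Rabs_mult. apply Rabs_triang. }
  assert (Hsum : Rabs (fx (t + s) - fx t) + Rabs (fy (t + s) - fy t) + Rabs (fz (t + s) - fz t)
                 <= Rabs s * (M + 3)).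
  { assert (Rabs rx <= Rabs s) by nra. assert (Rabs ry <= Rabs s) by nra. assert (Rabs rz <= Rabs s) by nra.
    unfold M. lra. }
  specialize (HFe (fx (t + s)) (fy (t + s)) (fz (t + s))).
  assert (Hex : Rabs (fx (t + s) - fx t) < eta).
  { pose proof (Rabs_pos rx). assert (Rabs rx <= Rabs s) by nra. unfold M in Hsd4.
    pose proof (Rabs_pos (Derive fy t)); pose proof (Rabs_pos (Derive fz t)). nra. }
  assert (Hey : Rabs (fy (t + s) - fy t) < eta).
  { pose proof (Rabs_pos ry). assert (Rabs ry <= Rabs s) by nra. unfold M in Hsd4.
    pose proof (Rabs_pos (Derive fx t)); pose proof (Rabs_pos (Derive fz t)). nra. }
  assert (Hez : Rabs (fz (t + s) - fz t) < eta).
  { pose proof (Rabs_pos rz). assert (Rabs rz <= Rabs s) by nra. unfold M in Hsd4.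
    pose proof (Rabs_pos (Derive fx t)); pose proof (Rabs_pos (Derive fy t)). nra. }
  specialize (HFe Hex Hey Hez).
  set (k := cos (distDelta a_hex (fx t) (fy t))) in *.
  assert (Hk : Rabs k <= 1) by (unfold k; apply Rabs_le; apply COS_bound).
  assert (HN : Nrm k (fx (t + s) - fx t) (fy (t + s) - fy t) (fz (t + s) - fz t) <=
               Rabs s * speed a_hex fx fy fz t + (Rabs rx + Rabs ry + Rabs rz)).
  { replace (fx (t + s) - fx t) with (s * Derive fx t + rx) by (unfold rx; ring).
    replace (fy (t + s) - fy t) with (s * Derive fy t + ry) by (unfold ry; ring).
    replace (fz (t + s) - fz t) with (s * Derive fz t + rz) by (unfold rz; ring).
    eapply Rle_trans; [apply Nrm_tri|]. rewrite Nrm_scal.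
    assert (Nrm k (Derive fx t) (Derive fy t) (Derive fz t) = speed a_hex fx fy fz t).
    { unfold Nrm, speed, k. f_equal. ring. }
    rewrite H. pose proof (Nrm_le_abs k rx ry rz Hk). lra. }
  assert (Heps1M : eps1 * (M + 3) = eps / 2) by (unfold eps1; field; lra).
  assert (eps1 * (Rabs (fx (t + s) - fx t) + Rabs (fy (t + s) - fy t) + Rabs (fz (t + s) - fz t))
          <= Rabs s * (eps / 2)).
  { rewrite <- Heps1M. replace (Rabs s * (eps1 * (M + 3))) with (eps1 * (Rabs s * (M + 3))) by ring.
    apply Rmult_le_compat_l; lra. }
  assert (Rabs rx + Rabs ry + Rabs rz <= Rabs s * (eps / 2)) by nra.
  lra.
Qed.

Definition Fp (F : R -> R -> R -> R) (P : pt) : R :=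
  let '(x, y, z) := P in F x y z.

Lemma pw_bound F c u l L : ML F -> pw_len a_hex c u l L -> Fp F (c 1) - Fp F (c u) <= L.
Proof.
  intros HF. revert u L. induction l as [|v l IH]; intros u L H; simpl in H.
  - destruct H as [-> ->]. lra.
  - destruct H as [Huv [fx [fy [fz [Hx [Hy [Hz [Hc [L' [Hpw ->]]]]]]]]]].
    specialize (IH v L' Hpw).
    rewrite (Hc u) in * by lra. rewrite (Hc v) in IH by lra. simpl in *.
    pose proof (piece_bound F fx fy fz u v HF Hx Hy Hz Huv). lra.
Qed.

Lemma ML_opp F : ML F -> ML (fun x y z => - F x y z).
Proof.
  intros H x y z eps Heps. destruct (H x y z eps Heps) as [eta [Heta He]].
  exists eta; split; auto. intros. specialize (He x' y' z' H0 H1 H2).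
  replace (- F x' y' z' - - F x y z) with (- (F x' y' z' - F x y z)) by ring.
  rewrite Rabs_Ropp. auto.
Qed.

Lemma Nrm_ge_xy k w1 w2 w3 : sqrt (w1 ^ 2 + w2 ^ 2) <= Nrm k w1 w2 w3.
Proof. unfold Nrm. apply sqrt_le_1; [pos2|pos2|]. pose proof (pow2_ge_0 (k * w3)). lra. Qed.

Lemma Nrm_ge_z k w1 w2 w3 : 0 <= k -> k * Rabs w3 <= Nrm k w1 w2 w3.
Proof.
  intros Hk. unfold Nrm. rewrite <- (sqrt_pow2 (k * Rabs w3)) by (apply Rmult_le_pos; auto; apply Rabs_pos).
  apply sqrt_le_1; [pos2|pos2|]. replace ((k * Rabs w3) ^ 2) with ((k * w3) ^ 2).
  - pose proof (pow2_ge_0 w1); pose proof (pow2_ge_0 w2). lra.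
  - rewrite <- (abs_sq (k * w3)). rewrite Rabs_mult, (Rabs_right k) by lra. reflexivity.
Qed.

Lemma ML_lin tx ty : 0 < tx ^ 2 + ty ^ 2 ->
  ML (fun x y z => (x * tx + y * ty) / sqrt (tx ^ 2 + ty ^ 2)).
Proof.
  intros Ht x y z eps Heps. exists 1. split; [lra|]. intros x' y' z' _ _ _.
  assert (Hs : 0 < sqrt (tx ^ 2 + ty ^ 2)) by (apply sqrt_lt_R0; auto).
  replace ((x' * tx + y' * ty) / sqrt (tx ^ 2 + ty ^ 2) - (x * tx + y * ty) / sqrt (tx ^ 2 + ty ^ 2))
    with (((x' - x) * tx + (y' - y) * ty) / sqrt (tx ^ 2 + ty ^ 2)) by (field; lra).
  assert (Rabs (((x' - x) * tx + (y' - y) * ty) / sqrt (tx ^ 2 + ty ^ 2)) <= sqrt ((x' - x) ^ 2 + (y' - y) ^ 2)).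
  { rewrite Rabs_div by lra. rewrite (Rabs_right (sqrt _)) by lra.
    apply Rle_div_l; auto. rewrite <- sqrt_mult by pos2.
    rewrite <- (sqrt_pow2 (Rabs _)) by apply Rabs_pos. rewrite abs_sq.
    apply sqrt_le_1; [pos2|pos2|]. pose proof (pow2_ge_0 ((x'-x)*ty - (y'-y)*tx)). nra. }
  pose proof (Nrm_ge_xy (cos (distDelta a_hex x y)) (x' - x) (y' - y) (z' - z)).
  assert (0 <= eps * (Rabs (x' - x) + Rabs (y' - y) + Rabs (z' - z))).
  { apply Rmult_le_pos; [lra|]. pose proof (Rabs_pos (x'-x)); pose proof (Rabs_pos (y'-y)); pose proof (Rabs_pos (z'-z)); lra. }
  lra.
Qed.

Lemma ML_z : ML (fun x y z => z / 2).
Proof.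
  intros x y z eps Heps. exists 1. split; [lra|]. intros x' y' z' _ _ _.
  replace (z' / 2 - z / 2) with ((z' - z) / 2) by field.
  pose proof (cos_dist_ge x y).
  pose proof (Nrm_ge_z (cos (distDelta a_hex x y)) (x' - x) (y' - y) (z' - z) ltac:(lra)).
  assert (Rabs ((z' - z) / 2) = Rabs (z' - z) / 2) by (rewrite Rabs_div by lra; rewrite (Rabs_right 2) by lra; reflexivity).
  pose proof (Rabs_pos (z'-z)).
  assert (0 <= eps * (Rabs (x' - x) + Rabs (y' - y) + Rabs (z' - z))).
  { apply Rmult_le_pos; [lra|]. pose proof (Rabs_pos (x'-x)); pose proof (Rabs_pos (y'-y)); lra. }
  nra.
Qed.

Definition sg (k : Z) : R := if Z.even k then 1 else -1.
Definition tx (m n : Z) : R := PI * IZR m + PI / 2 * IZR n.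
Definition ty (n : Z) : R := PI * sqrt 3 / 2 * IZR n.

Lemma pair3 (a b c a' b' c' : R) : a = a' -> b = b' -> c = c' -> (a, b, c) = (a', b', c').
Proof. intros -> -> ->. reflexivity. Qed.

Lemma word_form w : exists k m n : Z, forall x y z,
  word_act a_hex w (x, y, z) = (sg k * x + tx m n, sg k * y + ty n, z + IZR k * PI).
Proof.
  induction w as [|[g b] w IH].
  - exists 0%Z, 0%Z, 0%Z. intros. simpl. unfold sg, tx, ty. simpl. apply pair3; field.
  - destruct IH as [k [m [n IH]]]. simpl.
    destruct g; destruct b.
    + exists k, (m + 1)%Z, n. intros. rewrite IH. simpl. unfold tx, a_hex. rewrite plus_IZR. apply pair3; field.
    + exists k, (m - 1)%Z, n. intros. rewrite IH. simpl. unfold tx, a_hex. rewrite minus_IZR. apply pair3; field.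
    + exists k, m, (n + 1)%Z. intros. rewrite IH. simpl. unfold tx, ty, a_hex. rewrite plus_IZR. apply pair3; field.
    + exists k, m, (n - 1)%Z. intros. rewrite IH. simpl. unfold tx, ty, a_hex. rewrite minus_IZR. apply pair3; field.
    + exists (k + 2)%Z, m, n. intros. rewrite IH. simpl. unfold sg. rewrite Z.even_add. simpl.
      rewrite plus_IZR. destruct (Z.even k); simpl; apply pair3; field.
    + exists (k - 2)%Z, m, n. intros. rewrite IH. simpl. unfold sg. rewrite Z.even_sub. simpl.
      rewrite minus_IZR. destruct (Z.even k); simpl; apply pair3; field.
    + exists (k + 1)%Z, (- m)%Z, (- n)%Z. intros. rewrite IH. simpl. unfold sg, tx, ty.
      rewrite Z.even_add. rewrite !opp_IZR, plus_IZR. destruct (Z.even k); simpl; apply pair3; field.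
    + exists (k - 1)%Z, (- m)%Z, (- n)%Z. intros. rewrite IH. simpl. unfold sg, tx, ty.
      rewrite Z.even_sub. rewrite !opp_IZR, minus_IZR. destruct (Z.even k); simpl; apply pair3; field.
Qed.

Lemma lat_norm m n : (m <> 0 \/ n <> 0)%Z -> PI ^ 2 <= tx m n ^ 2 + ty n ^ 2.
Proof.
  intros H. assert (Hz : (1 <= m * m + m * n + n * n)%Z) by nia.
  apply IZR_le in Hz. rewrite !plus_IZR, !mult_IZR in Hz.
  unfold tx, ty. pose proof sqrt3_sq.
  replace ((PI * IZR m + PI / 2 * IZR n) ^ 2 + (PI * sqrt 3 / 2 * IZR n) ^ 2) with
    (PI ^ 2 * (IZR m * IZR m + IZR m * IZR n + (sqrt 3 * sqrt 3 + 1) / 4 * (IZR n * IZR n))) by (field).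
  rewrite H0. assert (0 <= PI ^ 2) by pos2. nra.
Qed.

Lemma sin_lb3 a : 0 <= a -> a <= 4 -> a - a ^ 3 / 6 <= sin a.
Proof.
  intros H1 H2. destruct (pre_sin_bound a 0 H1 H2) as [H _].
  replace (a - a ^ 3 / 6) with (sin_approx a (2 * 0 + 1)); auto.
  unfold sin_approx, sin_term. simpl. field.
Qed.

Lemma sin_lip0 u v : u < v -> Rabs (sin v - sin u) <= v - u.
Proof.
  intros H. destruct (MVT_cor2 sin cos u v H) as [c [Hc _]].
  { intros; apply derivable_pt_lim_sin. }
  rewrite Hc. rewrite Rabs_mult. rewrite (Rabs_right (v-u)) by lra.
  pose proof (COS_bound c).
  assert (Rabs (cos c) <= 1) by (apply Rabs_le; lra). nra.
Qed.

Lemma sin_abs_le x : Rabs (sin x) <= Rabs x.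
Proof.
  destruct (Rtotal_order 0 x) as [H|[H|H]].
  - pose proof (sin_lip0 0 x H). rewrite sin_0, Rminus_0_r, Rminus_0_r in H0. rewrite (Rabs_right x) by lra. auto.
  - subst. rewrite sin_0. lra.
  - pose proof (sin_lip0 x 0 H). rewrite sin_0, Rminus_0_l, Rabs_Ropp in H0. rewrite (Rabs_left x) by lra. lra.
Qed.

Lemma one_minus_cos u : 2 - 2 * cos u <= u ^ 2.
Proof.
  replace u with (2 * (u / 2)) at 1 by field. rewrite cos_2a_sin.
  pose proof (sin_abs_le (u / 2)).
  assert (sin (u/2) ^ 2 <= (u / 2) ^ 2).
  { rewrite <- (abs_sq (sin (u/2))), <- (abs_sq (u/2)). apply pow_incr. split; auto. apply Rabs_pos. }
  replace (2 - 2 * (1 - 2 * sin (u / 2) * sin (u / 2))) with (4 * sin (u/2) ^ 2) by ring.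
  replace (u ^ 2) with (4 * (u / 2) ^ 2) by field. lra.
Qed.

Lemma Rmin_lip a b c : Rabs (Rmin a c - Rmin b c) <= Rabs (a - b).
Proof.
  unfold Rmin. destruct (Rle_dec a c); destruct (Rle_dec b c); apply Rabs_le;
  pose proof (Rle_abs (a - b)); pose proof (Rle_abs (b - a)); rewrite Rabs_minus_sym in H0; lra.
Qed.

Lemma cs2 X1 Y1 X2 Y2 : X1 * X2 + Y1 * Y2 <= sqrt (X1 ^ 2 + Y1 ^ 2) * sqrt (X2 ^ 2 + Y2 ^ 2).
Proof.
  rewrite <- sqrt_mult by pos2.
  destruct (Rle_lt_dec (X1 * X2 + Y1 * Y2) 0).
  { pose proof (sqrt_pos ((X1 ^ 2 + Y1 ^ 2) * (X2 ^ 2 + Y2 ^ 2))). lra. }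
  apply Rsqr_incr_0_var; [|apply sqrt_pos]. unfold Rsqr. rewrite sqrt_sqrt by pos2.
  pose proof (pow2_ge_0 (X1 * Y2 - X2 * Y1)). nra.
Qed.

Definition V4 := (R * R * R * R)%type.
Definition dot (p q : V4) : R :=
  let '(p1, p2, p3, p4) := p in let '(q1, q2, q3, q4) := q in p1 * q1 + p2 * q2 + p3 * q3 + p4 * q4.
Definition lc (a : R) (p : V4) (b : R) (q : V4) : V4 :=
  let '(p1, p2, p3, p4) := p in let '(q1, q2, q3, q4) := q in
  (a * p1 + b * q1, a * p2 + b * q2, a * p3 + b * q3, a * p4 + b * q4).
Definition neg4 (p : V4) : V4 := let '(p1, p2, p3, p4) := p in (- p1, - p2, - p3, - p4).

Lemma dot_lc_l a p b q r : dot (lc a p b q) r = a * dot p r + b * dot q r.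
Proof. destruct p as [[[? ?] ?] ?]; destruct q as [[[? ?] ?] ?]; destruct r as [[[? ?] ?] ?]; simpl; ring. Qed.
Lemma dot_comm p q : dot p q = dot q p.
Proof. destruct p as [[[? ?] ?] ?]; destruct q as [[[? ?] ?] ?]; simpl; ring. Qed.
Lemma dot_neg_l p q : dot (neg4 p) q = - dot p q.
Proof. destruct p as [[[? ?] ?] ?]; destruct q as [[[? ?] ?] ?]; simpl; ring. Qed.
Lemma dot_pos p : 0 <= dot p p.
Proof. destruct p as [[[p1 p2] p3] p4]; simpl. pose proof (Rle_0_sqr p1); pose proof (Rle_0_sqr p2);
  pose proof (Rle_0_sqr p3); pose proof (Rle_0_sqr p4). unfold Rsqr in *. lra. Qed.

Lemma cs4 p q : - (sqrt (dot p p) * sqrt (dot q q)) <= dot p q.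
Proof.
  rewrite <- sqrt_mult by apply dot_pos.
  destruct (Rle_lt_dec 0 (dot p q)).
  { pose proof (sqrt_pos (dot p p * dot q q)). lra. }
  cut (- dot p q <= sqrt (dot p p * dot q q)); [lra|].
  apply Rsqr_incr_0_var; [|apply sqrt_pos]. unfold Rsqr. rewrite sqrt_sqrt by (apply Rmult_le_pos; apply dot_pos).
  destruct p as [[[p1 p2] p3] p4]; destruct q as [[[q1 q2] q3] q4]; simpl.
  pose proof (pow2_ge_0 (p1*q2-p2*q1)). pose proof (pow2_ge_0 (p1*q3-p3*q1)).
  pose proof (pow2_ge_0 (p1*q4-p4*q1)). pose proof (pow2_ge_0 (p2*q3-p3*q2)).
  pose proof (pow2_ge_0 (p2*q4-p4*q2)). pose proof (pow2_ge_0 (p3*q4-p4*q3)). nra.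
Qed.

Lemma dot_bound a b : dot a a = 1 -> dot b b = 1 -> -1 <= dot a b <= 1.
Proof.
  intros Ha Hb. split.
  - pose proof (cs4 a b). rewrite Ha, Hb, sqrt_1 in H. lra.
  - pose proof (cs4 (neg4 a) b).
    assert (E1 : dot (neg4 a) (neg4 a) = dot a a) by (destruct a as [[[? ?] ?] ?]; simpl; ring).
    rewrite E1, dot_neg_l, Ha, Hb, sqrt_1 in H. lra.
Qed.

Lemma acos_le_mono x y : -1 <= x <= 1 -> -1 <= y <= 1 -> x <= y -> acos y <= acos x.
Proof.
  intros Hx Hy Hxy. destruct (Rle_lt_dec (acos y) (acos x)); auto.
  pose proof (acos_bound x); pose proof (acos_bound y).
  assert (cos (acos y) < cos (acos x)) by (apply cos_decreasing_1; lra).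
  rewrite !cos_acos in H1 by lra. lra.
Qed.

Lemma sph_tri a b v : dot a a = 1 -> dot b b = 1 -> dot v v = 1 ->
  acos (dot a v) <= acos (dot a b) + acos (dot b v).
Proof.
  intros Ha Hb Hv.
  pose proof (dot_bound a b Ha Hb) as Hab. pose proof (dot_bound b v Hb Hv) as Hbv.
  pose proof (dot_bound a v Ha Hv) as Hav.
  set (be := acos (dot a b)). set (ga := acos (dot b v)).
  pose proof (acos_bound (dot a b)). pose proof (acos_bound (dot b v)).
  pose proof (acos_bound (dot a v)).
  destruct (Rle_lt_dec PI (be + ga)).
  { fold be ga in H, H0. lra. }
  assert (Hc : cos (be + ga) = dot a b * dot b v - sqrt (1 - (dot a b)²) * sqrt (1 - (dot b v)²)).
  { rewrite cos_plus. unfold be, ga. rewrite !cos_acos by lra. rewrite !sin_acos by lra. ring. }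
  set (p := lc 1 a (- dot a b) b). set (q := lc 1 v (- dot b v) b).
  assert (Hpp : dot p p = 1 - (dot a b)²).
  { unfold p. rewrite dot_lc_l, !(dot_comm _ (lc _ _ _ _)), !dot_lc_l. rewrite (dot_comm b a). rewrite Ha, Hb. unfold Rsqr. ring. }
  assert (Hqq : dot q q = 1 - (dot b v)²).
  { unfold q. rewrite dot_lc_l, !(dot_comm _ (lc _ _ _ _)), !dot_lc_l. rewrite (dot_comm v b). rewrite Hv, Hb. unfold Rsqr. ring. }
  assert (Hpq : dot p q = dot a v - dot a b * dot b v).
  { unfold p, q. rewrite dot_lc_l, !(dot_comm _ (lc _ _ _ _)), !dot_lc_l. rewrite (dot_comm v b), (dot_comm v a), Hb, (dot_comm b a). ring. }
  pose proof (cs4 p q). rewrite Hpp, Hqq, Hpq in H2.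
  assert (cos (be + ga) <= dot a v) by lra.
  fold be ga in H, H0.
  assert (Hr : acos (dot a v) <= acos (cos (be + ga))).
  { apply acos_le_mono; auto. apply COS_bound. }
  rewrite acos_cos in Hr by lra. exact Hr.
Qed.

Lemma acos_small e c : 0 <= c <= 1 -> -1 <= e <= 1 -> 1 - c ^ 2 / 2 <= e -> acos e <= c + 2 * c ^ 3.
Proof.
  intros Hc He Hce. set (th := acos e). pose proof (acos_bound e) as Hb. fold th in Hb.
  assert (Hcos : cos th = e) by (unfold th; apply cos_acos; lra).
  set (x := th / 2).
  assert (Hx : 0 <= x <= PI / 2) by (unfold x; lra).
  assert (Hs2 : sin x ^ 2 <= c ^ 2 / 4).
  { assert (cos th = 1 - 2 * sin x * sin x) by (unfold x; rewrite <- cos_2a_sin; f_equal; field).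
    simpl. lra. }
  assert (Hs0 : 0 <= sin x) by (apply sin_ge_0; lra).
  assert (Hsx : sin x <= c / 2).
  { apply Rsqr_incr_0_var; [|lra]. unfold Rsqr. simpl in Hs2. lra. }
  pose proof PI_4. pose proof PI2_3_2.
  assert (Hlb := sin_lb3 x ltac:(lra) ltac:(lra)).
  assert (Hx3 : x ^ 3 / 6 <= 2 / 3 * x).
  { assert (x ^ 2 <= 4) by nra. assert (x ^ 3 = x * x ^ 2) by ring. nra. }
  assert (Hxc : x <= 3 / 2 * c) by lra.
  assert (x ^ 3 <= (3 / 2 * c) ^ 3) by (apply pow_incr; lra).
  assert (th = 2 * x) by (unfold x; field). assert ((3/2*c)^3 = 27/8 * c^3) by field. assert (0 <= c^3) by (apply pow_le; lra). lra.
Qed.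

Definition rho dx dy x y := sqrt ((x - dx) ^ 2 + (y - dy) ^ 2).
Definition psi dx dy x y := Rmin (rho dx dy x y) (PI / 2).
Definition Sf dx dy x y := sin (psi dx dy x y) / rho dx dy x y.
Definition Phi dx dy (x y z : R) : V4 :=
  (cos (psi dx dy x y) * cos z, cos (psi dx dy x y) * sin z,
   Sf dx dy x y * (x - dx), Sf dx dy x y * (y - dy)).

Lemma rho_pos dx dy x y : 0 <= rho dx dy x y.
Proof. apply sqrt_pos. Qed.

Lemma rho_sq dx dy x y : rho dx dy x y ^ 2 = (x - dx) ^ 2 + (y - dy) ^ 2.
Proof. unfold rho. apply pow2_sqrt. pos2. Qed.

Lemma psi_bounds dx dy x y : 0 <= psi dx dy x y <= PI / 2 /\ psi dx dy x y <= rho dx dy x y.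
Proof.
  unfold psi. pose proof (rho_pos dx dy x y). pose proof PI_RGT_0.
  unfold Rmin. destruct (Rle_dec _ _); lra.
Qed.

Lemma sin_psi dx dy x y : sin (psi dx dy x y) = Sf dx dy x y * rho dx dy x y.
Proof.
  unfold Sf. destruct (Req_dec (rho dx dy x y) 0) as [H|H].
  - unfold psi. rewrite H. unfold Rmin. destruct (Rle_dec 0 (PI/2)).
    + rewrite sin_0. ring.
    + pose proof PI_RGT_0. lra.
  - field. auto.
Qed.

Lemma Sf_bounds dx dy x y : 0 <= Sf dx dy x y <= 1.
Proof.
  destruct (psi_bounds dx dy x y) as [[H1 H2] H3].
  pose proof PI_RGT_0 as HPI.
  assert (Hs0 : 0 <= sin (psi dx dy x y)) by (apply sin_ge_0; lra).
  assert (Hsle : sin (psi dx dy x y) <= rho dx dy x y).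
  { pose proof (sin_abs_le (psi dx dy x y)). rewrite Rabs_right in H by lra. rewrite Rabs_right in H by lra. lra. }
  unfold Sf. destruct (Req_dec (rho dx dy x y) 0) as [H|H].
  - rewrite H. unfold Rdiv. rewrite Rinv_0. lra.
  - pose proof (rho_pos dx dy x y). split.
    + apply Rdiv_le_0_compat; lra.
    + apply Rle_div_l; lra.
Qed.

Lemma Phi_unit dx dy x y z : dot (Phi dx dy x y z) (Phi dx dy x y z) = 1.
Proof.
  unfold Phi, dot.
  pose proof (sin_psi dx dy x y). pose proof (rho_sq dx dy x y).
  pose proof (sin2_cos2 z). pose proof (sin2_cos2 (psi dx dy x y)). unfold Rsqr in *.
  set (S := Sf dx dy x y) in *. set (c := cos (psi dx dy x y)) in *.
  transitivity (c * c * (sin z * sin z + cos z * cos z) + S * S * ((x - dx) ^ 2 + (y - dy) ^ 2)); [ring|].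
  rewrite H1, <- H0. replace (S * S * rho dx dy x y ^ 2) with (sin (psi dx dy x y) * sin (psi dx dy x y)) by (rewrite H; ring).
  lra.
Qed.

Lemma Phi_anti dx dy x y z s : (s = PI \/ s = - PI) ->
  Phi dx dy (2 * dx - x) (2 * dy - y) (z + s) = neg4 (Phi dx dy x y z).
Proof.
  intros Hs.
  assert (Hr : rho dx dy (2 * dx - x) (2 * dy - y) = rho dx dy x y) by (unfold rho; f_equal; ring).
  assert (Hp : psi dx dy (2 * dx - x) (2 * dy - y) = psi dx dy x y) by (unfold psi; rewrite Hr; auto).
  assert (HS : Sf dx dy (2 * dx - x) (2 * dy - y) = Sf dx dy x y) by (unfold Sf; rewrite Hp, Hr; auto).
  assert (Hc : cos (z + s) = - cos z /\ sin (z + s) = - sin z).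
  { destruct Hs as [->| ->]. split; [apply neg_cos|apply neg_sin].
    replace (z + - PI) with (z - PI) by ring. rewrite cos_minus, sin_minus, cos_PI, sin_PI.
    split; ring. }
  destruct Hc as [Hc1 Hc2].
  unfold Phi, neg4. rewrite Hp, HS, Hc1, Hc2. f_equal; [f_equal; [f_equal|]|]; ring.
Qed.

Lemma chord dx dy x1 y1 z1 x2 y2 z2 k1 k2 :
  cos (psi dx dy x1 y1) <= k1 -> cos (psi dx dy x2 y2) <= k2 ->
  2 - 2 * dot (Phi dx dy x1 y1 z1) (Phi dx dy x2 y2 z2) <= (x2 - x1) ^ 2 + (y2 - y1) ^ 2 + k1 * k2 * (z2 - z1) ^ 2.
Proof.
  intros Hk1 Hk2.
  destruct (psi_bounds dx dy x1 y1) as [[Hp1a Hp1b] Hp1c].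
  destruct (psi_bounds dx dy x2 y2) as [[Hp2a Hp2b] Hp2c].
  pose proof (sin_psi dx dy x1 y1) as Hs1. pose proof (sin_psi dx dy x2 y2) as Hs2.
  pose proof (Sf_bounds dx dy x1 y1) as HS1. pose proof (Sf_bounds dx dy x2 y2) as HS2.
  pose proof (rho_sq dx dy x1 y1) as Hr1. pose proof (rho_sq dx dy x2 y2) as Hr2.
  pose proof (rho_pos dx dy x1 y1) as Hr1p. pose proof (rho_pos dx dy x2 y2) as Hr2p.
  pose proof (cs2 (x1 - dx) (y1 - dy) (x2 - dx) (y2 - dy)) as Hcs.
  pose proof (Rmin_lip (rho dx dy x1 y1) (rho dx dy x2 y2) (PI / 2)) as Hlip.
  pose proof (one_minus_cos (psi dx dy x1 y1 - psi dx dy x2 y2)) as Ho1.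
  pose proof (one_minus_cos (z1 - z2)) as Ho2.
  pose proof (COS_bound (z1 - z2)) as Hcz.
  pose proof PI_RGT_0 as HPI.
  assert (Hc1 : 0 <= cos (psi dx dy x1 y1)) by (apply cos_ge_0; lra).
  assert (Hc2 : 0 <= cos (psi dx dy x2 y2)) by (apply cos_ge_0; lra).
  rewrite cos_minus in Ho1, Hcz, Ho2. rewrite Hs1, Hs2 in Ho1.
  unfold Phi, dot. fold (psi dx dy x1 y1) (psi dx dy x2 y2).
  unfold psi in Hlip. fold (psi dx dy x1 y1) (psi dx dy x2 y2) in Hlip.
  unfold rho in Hcs. fold (rho dx dy x1 y1) (rho dx dy x2 y2) in Hcs.
  set (p1 := psi dx dy x1 y1) in *. set (p2 := psi dx dy x2 y2) in *.
  set (r1 := rho dx dy x1 y1) in *. set (r2 := rho dx dy x2 y2) in *.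
  set (S1 := Sf dx dy x1 y1) in *. set (S2 := Sf dx dy x2 y2) in *.
  set (c1 := cos p1) in *. set (c2 := cos p2) in *.
  set (C := cos z1 * cos z2 + sin z1 * sin z2) in *.
  set (I := (x1 - dx) * (x2 - dx) + (y1 - dy) * (y2 - dy)) in *.
  assert (Hid : 2 - 2 * (c1 * cos z1 * (c2 * cos z2) + c1 * sin z1 * (c2 * sin z2) +
      S1 * (x1 - dx) * (S2 * (x2 - dx)) + S1 * (y1 - dy) * (S2 * (y2 - dy))) =
      (2 - 2 * (c1 * c2 + S1 * r1 * (S2 * r2))) + c1 * c2 * (2 - 2 * C) + 2 * (S1 * S2) * (r1 * r2 - I)).
  { unfold C, I. ring. }
  rewrite Hid.
  assert (T1 : 2 - 2 * (c1 * c2 + S1 * r1 * (S2 * r2)) <= (r1 - r2) ^ 2).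
  { eapply Rle_trans; [exact Ho1|]. rewrite <- (abs_sq (p1 - p2)), <- (abs_sq (r1 - r2)).
    apply pow_incr. split; [apply Rabs_pos| exact Hlip]. }
  assert (T2 : c1 * c2 * (2 - 2 * C) <= k1 * k2 * (z2 - z1) ^ 2).
  { replace ((z2 - z1) ^ 2) with ((z1 - z2) ^ 2) by ring.
    apply Rmult_le_compat; try lra. apply Rmult_le_pos; lra. apply Rmult_le_compat; lra. }
  assert (T3 : 2 * (S1 * S2) * (r1 * r2 - I) <= 2 * (r1 * r2 - I)).
  { assert (0 <= S1 * S2 <= 1) by (split; [apply Rmult_le_pos|]; nra). nra. }
  assert (Hsum : (r1 - r2) ^ 2 + 2 * (r1 * r2 - I) = (x2 - x1) ^ 2 + (y2 - y1) ^ 2).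
  { transitivity (r1 ^ 2 + r2 ^ 2 - 2 * I); [ring|]. rewrite Hr1, Hr2. unfold I. ring. }
  lra.
Qed.

Lemma cpsi_le dx dy x y : distDelta a_hex x y <= rho dx dy x y ->
  cos (psi dx dy x y) <= cos (distDelta a_hex x y).
Proof.
  intros Hd. pose proof (dD_le_PI3 x y). pose proof (dD_pos a_hex x y).
  destruct (psi_bounds dx dy x y) as [[H1 H2] H3]. pose proof PI_RGT_0.
  assert (Hle : distDelta a_hex x y <= psi dx dy x y).
  { unfold psi. apply Rmin_glb; lra. }
  destruct (Req_dec (distDelta a_hex x y) (psi dx dy x y)) as [<-|Hne]; [lra|].
  left. apply cos_decreasing_1; lra.
Qed.

Lemma sqrt_le_sum a b : 0 <= a -> 0 <= b -> sqrt (a ^ 2 + b ^ 2) <= a + b.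
Proof.
  intros Ha Hb. apply Rsqr_incr_0_var; [|lra]. unfold Rsqr. rewrite sqrt_sqrt by pos2. nra.
Qed.

Lemma ML_sph dx dy v : dot v v = 1 ->
  (forall x y, distDelta a_hex x y <= rho dx dy x y) ->
  ML (fun x y z => acos (dot (Phi dx dy x y z) v)).
Proof.
  intros Hv Hd x y z eps Heps.
  set (eta := Rmin (Rmin (1/2) (eps/12)) (eps ^ 2 / 32)).
  assert (He0 : 0 < eta).
  { unfold eta. apply Rmin_pos; [apply Rmin_pos; lra|]. assert (0 < eps ^ 2) by (apply pow_lt; lra). lra. }
  assert (He1 : eta <= 1/2) by (unfold eta; eapply Rle_trans; [apply Rmin_l|apply Rmin_l]).
  assert (He2 : eta <= eps/12) by (unfold eta; eapply Rle_trans; [apply Rmin_l|apply Rmin_r]).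
  assert (He3 : eta <= eps ^ 2 / 32) by (unfold eta; apply Rmin_r).
  exists eta. split; auto. intros x' y' z' Hx Hy Hz.
  set (P := Phi dx dy x y z). set (Q := Phi dx dy x' y' z').
  assert (HP : dot P P = 1) by apply Phi_unit. assert (HQ : dot Q Q = 1) by apply Phi_unit.
  assert (Habs : Rabs (acos (dot Q v) - acos (dot P v)) <= acos (dot P Q)).
  { pose proof (sph_tri Q P v HQ HP Hv). pose proof (sph_tri P Q v HP HQ Hv).
    rewrite (dot_comm Q P) in H. apply Rabs_le; lra. }
  set (kP := cos (distDelta a_hex x y)). set (kQ := cos (distDelta a_hex x' y')).
  assert (HkP : 1/2 <= kP <= 1) by (split; [apply cos_dist_ge|apply cos_dist_le]).
  assert (HkQ : 1/2 <= kQ <= 1) by (split; [apply cos_dist_ge|apply cos_dist_le]).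
  set (dx' := x' - x) in *. set (dy' := y' - y) in *. set (dz' := z' - z) in *.
  set (W := dx' ^ 2 + dy' ^ 2 + kP * kQ * dz' ^ 2).
  assert (Hch : 2 - 2 * dot P Q <= W).
  { apply chord; apply cpsi_le; apply Hd. }
  assert (Hsig : 0 <= Rabs dx' + Rabs dy' + Rabs dz') by (pose proof (Rabs_pos dx'); pose proof (Rabs_pos dy'); pose proof (Rabs_pos dz'); lra).
  assert (HW0 : 0 <= W) by (unfold W; assert (0 <= kP * kQ) by nra; pose proof (pow2_ge_0 dz'); pose proof (pow2_ge_0 dx'); pose proof (pow2_ge_0 dy'); nra).
  assert (HWs : W <= (Rabs dx' + Rabs dy' + Rabs dz') ^ 2).
  { unfold W. rewrite <- (abs_sq dx'), <- (abs_sq dy'), <- (abs_sq dz').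
    pose proof (Rabs_pos dx'); pose proof (Rabs_pos dy'); pose proof (Rabs_pos dz').
    assert (kP * kQ <= 1) by nra. assert (0 <= Rabs dz' ^ 2) by pos2. nra. }
  assert (HW3 : W <= 3 * eta ^ 2).
  { unfold W. assert (kP * kQ <= 1) by nra.
    assert (dx' ^ 2 <= eta ^ 2) by (rewrite <- abs_sq; apply pow_incr; split; [apply Rabs_pos|lra]).
    assert (dy' ^ 2 <= eta ^ 2) by (rewrite <- abs_sq; apply pow_incr; split; [apply Rabs_pos|lra]).
    assert (dz' ^ 2 <= eta ^ 2) by (rewrite <- abs_sq; apply pow_incr; split; [apply Rabs_pos|lra]).
    assert (0 <= dz' ^ 2) by pos2. assert (0 <= kP * kQ) by nra. nra. }
  set (c := sqrt W).
  assert (Hc0 : 0 <= c) by apply sqrt_pos.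
  assert (Hc2 : c ^ 2 = W) by (apply pow2_sqrt; auto).
  assert (Hc1 : c <= 1).
  { rewrite <- sqrt_1. apply sqrt_le_1; try lra. nra. }
  assert (Hcs : c <= Rabs dx' + Rabs dy' + Rabs dz').
  { apply Rsqr_incr_0_var; auto. unfold Rsqr. replace (c * c) with (c ^ 2) by ring. rewrite Hc2.
    simpl in HWs. lra. }
  pose proof (dot_bound P Q HP HQ) as HPQ.
  assert (Hac : acos (dot P Q) <= c + 2 * c ^ 3) by (apply acos_small; lra).
  set (N := Nrm kP dx' dy' dz').
  set (s := Rabs dx' + Rabs dy').
  assert (Hs0 : 0 <= s) by (unfold s; pose proof (Rabs_pos dx'); pose proof (Rabs_pos dy'); lra).
  assert (HkQP : kP * kQ <= kP ^ 2 + s).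
  { pose proof (dD_lip_abs a_hex x y x' y'). pose proof (cos_lip (distDelta a_hex x' y') (distDelta a_hex x y)).
    fold kP kQ in H0. assert (kP * kQ - kP ^ 2 = kP * (kQ - kP)) by ring.
    assert (kP * (kQ - kP) <= Rabs (kQ - kP)).
    { destruct (Rle_lt_dec 0 (kQ - kP)). rewrite Rabs_right by lra. nra.
      pose proof (Rabs_pos (kQ - kP)). nra. }
    unfold s, dx', dy'. lra. }
  assert (HcN : c <= N + sqrt s * Rabs dz').
  { unfold c. eapply Rle_trans; [| apply sqrt_le_sum; [apply sqrt_pos| apply Rmult_le_pos; [apply sqrt_pos| apply Rabs_pos]]].
    apply sqrt_le_1; [auto|pos2|]. unfold N, Nrm. rewrite pow2_sqrt by pos2.
    rewrite (Rpow_mult_distr (sqrt s)), (pow2_sqrt s), abs_sq by auto. unfold W.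
    assert (0 <= dz' ^ 2) by pos2. nra. }
  assert (Hsq : sqrt s <= eps / 4).
  { rewrite <- (sqrt_pow2 (eps/4)) by lra. apply sqrt_le_1; [auto|pos2|]. unfold s.
    replace ((eps/4)^2) with (eps^2/16) by field. lra. }
  assert (Hc3 : c ^ 3 <= c * (3 * eta ^ 2)) by (replace (c ^ 3) with (c * c ^ 2) by ring; rewrite Hc2; apply Rmult_le_compat_l; lra).
  assert (Heta2 : 6 * eta ^ 2 <= eps / 4) by nra.
  assert (c * (6 * eta ^ 2) <= (Rabs dx' + Rabs dy' + Rabs dz') * (eps / 4)).
  { apply Rmult_le_compat; try lra; try pos2. }
  assert (sqrt s * Rabs dz' <= eps / 4 * (Rabs dx' + Rabs dy' + Rabs dz')).
  { apply Rmult_le_compat; try lra; try apply sqrt_pos; try apply Rabs_pos.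
    pose proof (Rabs_pos dx'); pose proof (Rabs_pos dy'); lra. }
  assert (c * (6 * eta ^ 2) = 2 * (c * (3 * eta ^ 2))) by ring.
  assert ((Rabs dx' + Rabs dy' + Rabs dz') * (eps / 4) = eps / 4 * (Rabs dx' + Rabs dy' + Rabs dz')) by ring.
  assert (eps * (Rabs dx' + Rabs dy' + Rabs dz') = 2 * (eps / 4 * (Rabs dx' + Rabs dy' + Rabs dz')) + eps / 2 * (Rabs dx' + Rabs dy' + Rabs dz')) by field.
  assert (0 <= eps / 2 * (Rabs dx' + Rabs dy' + Rabs dz')) by (apply Rmult_le_pos; lra).
  fold N. replace (s + Rabs dz') with (Rabs dx' + Rabs dy' + Rabs dz') by (unfold s; ring). lra.
Qed.

Lemma sph_case (c : R -> pt) l L x0 y0 z0 m n s : (s = PI \/ s = - PI) -> pw_len a_hex c 0 l L ->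
  c 0 = (x0, y0, z0) -> c 1 = (-1 * x0 + tx m n, -1 * y0 + ty n, z0 + s) -> PI <= L.
Proof.
  intros Hs Hl Hc0 Hc1.
  set (dx := tx m n / 2). set (dy := ty n / 2).
  assert (Hd : forall x y, distDelta a_hex x y <= rho dx dy x y).
  { intros x y. eapply Rle_trans; [apply (dD_le a_hex x y m n)|]. right. unfold rho. f_equal.
    unfold dx, dy, tx, ty, a_hex. field. }
  set (v := Phi dx dy x0 y0 z0).
  assert (Hv : dot v v = 1) by apply Phi_unit.
  pose proof (pw_bound _ c 0 l L (ML_sph dx dy v Hv Hd) Hl) as Hb.
  rewrite Hc0, Hc1 in Hb. cbn beta iota delta [Fp] in Hb.
  replace (-1 * x0 + tx m n) with (2 * dx - x0) in Hb by (unfold dx; field).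
  replace (-1 * y0 + ty n) with (2 * dy - y0) in Hb by (unfold dy; field).
  rewrite (Phi_anti dx dy x0 y0 z0 s Hs) in Hb. fold v in Hb.
  rewrite dot_neg_l, Hv, acos_opp, acos_1 in Hb. lra.
Qed.

Lemma len_ge_PI (c : R -> pt) w L : (exists q, word_act a_hex w q <> q) ->
  c 1 = word_act a_hex w (c 0) -> curve_length a_hex c L -> PI <= L.
Proof.
  intros [q Hq] Hc [l Hl].
  destruct (word_form w) as [k [m [n Hw]]].
  destruct (c 0) as [[x0 y0] z0] eqn:Hc0.
  rewrite Hw in Hc.
  assert (Hb : forall F, ML F -> Fp F (c 1) - Fp F (c 0) <= L) by (intros; eapply pw_bound; eauto).
  pose proof PI_RGT_0 as HPI.
  assert (Hk : (k = 0 \/ k = 1 \/ k = -1 \/ 2 <= k \/ k <= -2)%Z) by lia.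
  destruct Hk as [Hk|[Hk|[Hk|[Hk|Hk]]]].
  -
    subst k. assert (Hmn : (m <> 0 \/ n <> 0)%Z).
    { destruct (Z.eq_dec m 0); destruct (Z.eq_dec n 0); try tauto. subst. exfalso. apply Hq.
      destruct q as [[x y] z]. rewrite Hw. unfold sg, tx, ty. simpl. apply pair3; ring. }
    pose proof (lat_norm m n Hmn) as HT.
    set (T := tx m n ^ 2 + ty n ^ 2) in *.
    assert (HT0 : 0 < T) by (assert (0 < PI ^ 2) by (apply pow_lt; lra); lra).
    specialize (Hb _ (ML_lin (tx m n) (ty n) HT0)).
    rewrite Hc, Hc0 in Hb. cbn beta iota delta [Fp] in Hb. replace (sg 0) with 1 in Hb by reflexivity.
    assert (Hs : 0 < sqrt T) by (apply sqrt_lt_R0; auto).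
    fold T in Hb.
    replace (((1 * x0 + tx m n) * tx m n + (1 * y0 + ty n) * ty n) / sqrt T - (x0 * tx m n + y0 * ty n) / sqrt T)
      with (T / sqrt T) in Hb by (unfold T in *; field; lra).
    assert (T / sqrt T = sqrt T).
    { rewrite <- (sqrt_sqrt T) at 1 by lra. field. lra. }
    assert (PI <= sqrt T).
    { rewrite <- (sqrt_pow2 PI) by lra. apply sqrt_le_1; [pos2|lra|lra]. }
    lra.
  - subst k. apply (sph_case c l L x0 y0 z0 m n (IZR 1 * PI)); auto. left; ring.
  - subst k. apply (sph_case c l L x0 y0 z0 m n (IZR (-1) * PI)); auto. right; ring.
  - specialize (Hb _ ML_z). rewrite Hc, Hc0 in Hb. cbn beta iota delta [Fp] in Hb.
    apply IZR_le in Hk. nra.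
  - specialize (Hb _ (ML_opp _ ML_z)). rewrite Hc, Hc0 in Hb. cbn beta iota delta [Fp] in Hb.
    apply IZR_le in Hk. nra.
Qed.

Lemma C1_lin (p q : R) : Defs.C1 (fun t => p * t + q).
Proof.
  intros t. split.
  - auto_derive. auto.
  - apply (continuous_ext (fun _ => p)).
    + intros x. symmetry. apply is_derive_unique. auto_derive; auto. ring.
    + apply continuous_const.
Qed.

Lemma Sys_ge : PI <= Sys_C2 a_hex.
Proof.
  unfold Sys_C2.
  set (E := fun L => exists (c : R -> pt) (w : list (gen * bool)),
    (exists q, word_act a_hex w q <> q) /\ c 1 = word_act a_hex w (c 0) /\ curve_length a_hex c L).
  pose proof PI_RGT_0 as HPI.
  set (fx := fun t => PI * t + 0). set (f0 := fun t : R => 0 * t + 0).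
  set (L0 := RInt (speed a_hex fx f0 f0) 0 1 + 0).
  assert (HE : E L0).
  { exists (fun t => (fx t, f0 t, f0 t)), ((T1, true) :: nil). split; [|split].
    - exists (0, 0, 0). simpl. intros Heq. injection Heq. intros. unfold a_hex in *. lra.
    - simpl. unfold fx, f0, a_hex. apply pair3; field.
    - exists (1 :: nil). simpl. split; [lra|]. exists fx, f0, f0.
      split; [apply C1_lin|]. split; [apply C1_lin|]. split; [apply C1_lin|].
      split; [intros; reflexivity|]. exists 0. split; [split; reflexivity| reflexivity]. }
  destruct (Glb_Rbar_correct E) as [Hlb Hglb].
  assert (Hpi : Rbar_le (Finite PI) (Glb_Rbar E)).
  { apply Hglb. intros L [c [w [Hq [Hc Hl]]]]. simpl. eapply len_ge_PI; eauto. }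
  specialize (Hlb L0 HE).
  destruct (Glb_Rbar E) as [r| |]; simpl in *; auto; contradiction.
Qed.

Lemma cont_const (k : R) t : continuous (fun _ : R => k) t.
Proof. apply (continuous_const (U:=R_UniformSpace) (V:=R_UniformSpace)). Qed.

Lemma cont_sub (f g : R -> R) t : continuous f t -> continuous g t -> continuous (fun s => f s - g s) t.
Proof.
  intros H1 H2. apply (continuous_ext (fun s => f s + (-1) * g s)).
  { intros x. change (f x + -1 * g x = f x - g x). ring. }
  apply cont_add; auto. apply cont_mul; auto. apply cont_const.
Qed.

Lemma RInt_strict (f g : R -> R) a b t0 : (forall t, continuous f t) -> (forall t, continuous g t) ->
  a < t0 < b -> (forall t, a <= t <= b -> f t <= g t) -> f t0 < g t0 -> RInt f a b < RInt g a b.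
Proof.
  intros Hf Hg Ht0 Hle Hlt.
  set (h := fun t => g t - f t).
  assert (Hh : continuous h t0).
  { unfold h. apply cont_sub; auto. }
  destruct (eps_cont h t0 Hh ((g t0 - f t0) / 2) ltac:(lra)) as [d [Hd Hdh]].
  set (r := Rmin d (Rmin (t0 - a) (b - t0)) / 2).
  assert (Hr0 : 0 < r) by (unfold r; assert (0 < Rmin d (Rmin (t0 - a) (b - t0))) by (repeat apply Rmin_pos; lra); lra).
  assert (Hr1 : r < d) by (unfold r in *; assert (Rmin d (Rmin (t0 - a) (b - t0)) <= d) by apply Rmin_l; lra).
  assert (Hr2 : r < t0 - a) by (unfold r in *; assert (Rmin d (Rmin (t0 - a) (b - t0)) <= t0 - a) by (eapply Rle_trans; [apply Rmin_r|apply Rmin_l]); lra).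
  assert (Hr3 : r < b - t0) by (unfold r in *; assert (Rmin d (Rmin (t0 - a) (b - t0)) <= b - t0) by (eapply Rle_trans; [apply Rmin_r|apply Rmin_r]); lra).
  rewrite <- (RInt_chasles_R f a (t0 - r) b Hf), <- (RInt_chasles_R f (t0 - r) (t0 + r) b Hf).
  rewrite <- (RInt_chasles_R g a (t0 - r) b Hg), <- (RInt_chasles_R g (t0 - r) (t0 + r) b Hg).
  assert (H1 : RInt f a (t0 - r) <= RInt g a (t0 - r)).
  { apply RInt_le; try lra; try (apply exRI; auto). intros; apply Hle; lra. }
  assert (H3 : RInt f (t0 + r) b <= RInt g (t0 + r) b).
  { apply RInt_le; try lra; try (apply exRI; auto). intros; apply Hle; lra. }
  assert (H2 : RInt f (t0 - r) (t0 + r) < RInt g (t0 - r) (t0 + r)).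
  { apply RInt_lt; try lra; intros; auto.
    assert (Rabs (x - t0) < d) by (apply Rabs_lt_between; lra).
    specialize (Hdh x H0). unfold h in Hdh. apply Rabs_lt_between in Hdh. lra. }
  lra.
Qed.

Definition Jy (y : R) := RInt (fun x => cos (distDelta a_hex x y)) 0 (4 * a_hex).

Lemma cont_x y t : continuous (fun x => cos (distDelta a_hex x y)) t.
Proof.
  apply (continuous_cos_comp (fun x => distDelta a_hex x y)).
  apply (cont_dist (fun x => x) (fun _ => y)). apply (continuous_id (U:=R_UniformSpace)). apply cont_const.
Qed.

Lemma Jy_lip y y' : Rabs (Jy y' - Jy y) <= (4 * a_hex) * Rabs (y' - y).
Proof.
  unfold Jy. pose proof PI_RGT_0. assert (Ha : 0 < 4 * a_hex) by (unfold a_hex; lra).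
  assert (E : RInt (fun x => cos (distDelta a_hex x y')) 0 (4 * a_hex) - RInt (fun x => cos (distDelta a_hex x y)) 0 (4 * a_hex)
     = RInt (fun x => cos (distDelta a_hex x y') - cos (distDelta a_hex x y)) 0 (4 * a_hex)).
  { symmetry. apply (RInt_minus (V:=R_CompleteNormedModule)); apply exRI; apply cont_x. }
  rewrite E. replace (4 * a_hex * Rabs (y' - y)) with ((4 * a_hex - 0) * Rabs (y' - y)) by ring.
  apply abs_RInt_le_const; [lra| |].
  - apply exRI. intros t. apply cont_sub; apply cont_x.
  - intros t _. eapply Rle_trans; [apply cos_lip|]. eapply Rle_trans; [apply dD_lip_abs|].
    rewrite Rminus_diag, Rabs_R0. lra.
Qed.

Lemma Jy_cont y : continuous Jy y.
Proof.
  apply cont_eps. intros eps Heps. pose proof PI_RGT_0.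
  assert (Ha : 0 < 4 * a_hex) by (unfold a_hex; lra).
  exists (eps / (4 * a_hex)). split; [apply Rdiv_lt_0_compat; lra|]. intros y' Hy'.
  eapply Rle_lt_trans; [apply Jy_lip|].
  apply (Rmult_lt_compat_l (4 * a_hex)) in Hy'; auto.
  replace (4 * a_hex * (eps / (4 * a_hex))) with eps in Hy' by (field; lra). lra.
Qed.

Lemma Jy_le y : Jy y <= 4 * a_hex.
Proof.
  unfold Jy. pose proof PI_RGT_0.
  replace (4 * a_hex) with ((4 * a_hex - 0) * 1) at 2 by ring.
  apply RInt_le_const; [unfold a_hex; lra| apply cont_x|]. intros; apply cos_dist_le.
Qed.

Lemma Jy_ge y : 2 * a_hex <= Jy y.
Proof.
  unfold Jy. pose proof PI_RGT_0.
  replace (2 * a_hex) with ((4 * a_hex - 0) * (1/2)) by field.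
  apply RInt_ge_const; [unfold a_hex; lra| apply cont_x|]. intros; apply cos_dist_ge.
Qed.

Lemma d_pos_pt : 0 < distDelta a_hex (PI / 4) (PI * sqrt 3 / 12).
Proof.
  pose proof PI_RGT_0. pose proof sqrt3_sq. pose proof sqrt3_pos.
  apply Rlt_le_trans with (sqrt (PI ^ 2 / 48)).
  { apply sqrt_lt_R0. assert (0 < PI ^ 2) by (apply pow_lt; lra). lra. }
  apply dD_ge. intros m n. apply sqrt_le_1; [|pos2|].
  { assert (0 < PI ^ 2) by (apply pow_lt; lra). lra. }
  assert (Hz : (1 <= (1 - 3 * n) * (1 - 3 * n))%Z) by nia.
  apply IZR_le in Hz. rewrite mult_IZR, minus_IZR, mult_IZR in Hz.
  assert (E : (PI * sqrt 3 / 12 - PI / 4 * sqrt 3 * IZR n) ^ 2 = PI ^ 2 / 48 * ((1 - 3 * IZR n) * (1 - 3 * IZR n))).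
  { transitivity (PI ^ 2 * (sqrt 3 * sqrt 3) / 144 * ((1 - 3 * IZR n) * (1 - 3 * IZR n))); [field|].
    rewrite H0. field. }
  unfold a_hex. rewrite E. pose proof (pow2_ge_0 (PI / 4 - (2 * (PI / 4) * IZR m + PI / 4 * IZR n))).
  assert (0 < PI ^ 2 / 48) by (assert (0 < PI ^ 2) by (apply pow_lt; lra); lra). nra.
Qed.

Lemma Jy_strict : Jy (PI * sqrt 3 / 12) < 4 * a_hex.
Proof.
  unfold Jy. pose proof PI_RGT_0.
  apply Rlt_le_trans with (RInt (fun _ => 1) 0 (4 * a_hex)); [|rewrite RInt_const_R; lra].
  apply (RInt_strict _ _ 0 (4 * a_hex) (PI / 4)); [apply cont_x| intros; apply cont_const| unfold a_hex; lra| intros; apply cos_dist_le|].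
  pose proof d_pos_pt. pose proof (dD_le_PI3 (PI / 4) (PI * sqrt 3 / 12)).
  rewrite <- cos_0. apply cos_decreasing_1; lra.
Qed.

Definition Iv := RInt Jy 0 (2 * a_hex * sqrt 3).

Lemma Iv_bounds : 0 < Iv < (2 * a_hex * sqrt 3) * (4 * a_hex).
Proof.
  pose proof PI_RGT_0. pose proof sqrt3_pos. pose proof sqrt3_sq.
  assert (HY : 0 < 2 * a_hex * sqrt 3) by (unfold a_hex; apply Rmult_lt_0_compat; lra).
  split.
  - unfold Iv. eapply Rlt_le_trans; [|apply (RInt_ge_const Jy 0 _ (2 * a_hex)); [lra|apply Jy_cont|intros; apply Jy_ge]].
    apply Rmult_lt_0_compat; [lra|unfold a_hex; lra].
  - unfold Iv. apply Rlt_le_trans with (RInt (fun _ => 4 * a_hex) 0 (2 * a_hex * sqrt 3)); [|rewrite RInt_const_R; lra].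
    apply (RInt_strict _ _ 0 _ (PI * sqrt 3 / 12)); [apply Jy_cont| intros; apply cont_const| |intros; apply Jy_le| apply Jy_strict].
    assert (0 < PI * sqrt 3) by (apply Rmult_lt_0_compat; lra). unfold a_hex. replace (2 * (PI / 4) * sqrt 3) with (PI * sqrt 3 / 2) by field. lra.
Qed.

Lemma Vol_eq : Vol_C2 a_hex = PI * Iv.
Proof.
  unfold Vol_C2. change (RInt (fun _ => Iv) 0 PI = PI * Iv). rewrite RInt_const_R. change ((PI - 0) * Iv = PI * Iv). ring.
Qed.

Theorem mainTheorem6 :
  Sys_C2 a_hex ^ 3 / Vol_C2 a_hex > 2 / sqrt 3.
Proof.
  pose proof Sys_ge as HS. pose proof Iv_bounds as [HI0 HI1]. rewrite Vol_eq.
  pose proof PI_RGT_0. pose proof sqrt3_pos. pose proof sqrt3_sq.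
  set (S := Sys_C2 a_hex) in *.
  assert (HV : 0 < PI * Iv) by (apply Rmult_lt_0_compat; lra).
  assert (HS3 : PI ^ 3 <= S ^ 3) by (apply pow_incr; lra).
  assert (HY : (2 * a_hex * sqrt 3) * (4 * a_hex) = PI ^ 2 * sqrt 3 / 2) by (unfold a_hex; field).
  rewrite HY in HI1.
  assert (HV2 : PI * Iv < PI ^ 3 * sqrt 3 / 2).
  { apply (Rmult_lt_compat_l PI) in HI1; [|lra]. replace (PI * (PI ^ 2 * sqrt 3 / 2)) with (PI ^ 3 * sqrt 3 / 2) in HI1 by field. lra. }
  assert (E : S ^ 3 / (PI * Iv) - 2 / sqrt 3 = (S ^ 3 * sqrt 3 - 2 * (PI * Iv)) / ((PI * Iv) * sqrt 3)).
  { field. split; lra. }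
  assert (0 < (S ^ 3 * sqrt 3 - 2 * (PI * Iv)) / ((PI * Iv) * sqrt 3)).
  { apply Rdiv_lt_0_compat; [|apply Rmult_lt_0_compat; lra].
    assert (PI ^ 3 * sqrt 3 <= S ^ 3 * sqrt 3) by (apply Rmult_le_compat_r; lra). lra. }
  lra.
Qed.
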